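(* For $\alpha\in[-1,1]$ let $\rho(\alpha)=\tfrac12(I+\alpha\sigma_x)=\tfrac12\begin{pmatrix}1&\alpha\\\alpha&1\end{pmatrix}$. Then for all $\alpha,\beta\in[-1,1]$ and $p\ge1$, $$D^p_{z,p}(\rho(\alpha),\rho(\beta))=2^{p-1}\Big(1-\sqrt{1-\max(\alpha^2,\beta^2)}\Big).$$
   Context: Qubit setting: $\mathcal{H}=\mathbb{C}^2$, $\mathcal{H}^*$ is identified with $\mathbb{C}^2$ via the dual basis, and $A^T$ is the usual matrix transpose; operators on $\mathcal{H}\otimes\mathcal{H}^*$ are $4\times4$ matrices in the basis $e_1\otimes e_1^*,e_1\otimes e_2^*,e_2\otimes e_1^*,e_2\otimes e_2^*$. $\sigma_x=\begin{pmatrix}0&1\\1&0\end{pmatrix}$, $\sigma_y=\begin{pmatrix}0&-i\\i&0\end{pmatrix}$, $\sigma_z=\begin{pmatrix}1&0\\0&-1\end{pmatrix}$. The set of couplings of states $\rho,\omega$ is $\mathcal{C}(\rho,\omega)=\{\Pi\in\mathcal{S}(\mathcal{H}\otimes\mathcal{H}^* ):\mathrm{tr}_{\mathcal{H}^*}[\Pi]=\omega,\ \mathrm{tr}_{\mathcal{H}}[\Pi]=\rho^T\}$. For $p\ge1$, $C_{z,p}=|\sigma_z\otimes I^T-I\otimes\sigma_z^T|^p=2^{p-1}(I\otimes I^T-\sigma_z\otimes\sigma_z^T)=\mathrm{diag}(0,2^p,2^p,0)$, and $D_{z,p}(\rho,\omega)=\big(\min_{\Pi\in\mathcal{C}(\rho,\omega)}\mathrm{tr}[\Pi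 C_{z,p}]\big)^{1/p}$. *)

(* Defs.v *)
From HB Require Import structures.
From mathcomp Require Import all_boot all_order all_algebra.
From mathcomp Require Import complex.
From mathcomp Require Import reals exp.
Set Implicit Arguments. Unset Strict Implicit. Unset Printing Implicit Defensive.
Import Order.TTheory GRing.Theory Num.Theory.
Local Open Scope ring_scope.
Local Open Scope complex_scope.

Section Defs.
Variable R : realType.
Notation C := (R[i]).

Definition adjmx m n (A : 'M[C]_(m, n)) : 'M[C]_(n, m) :=
  \matrix_(i, j) (A j i)^*.

Definition psd n (A : 'M[C]_n) : Prop :=
  adjmx A = A /\ forall v : 'cV[C]_n, 0 <= (adjmx v *m A *m v) ord0 ord0.

Definition is_state n (A : 'M[C]_n) : Prop := psd A /\ \tr A = 1.

(* basis e_i (x) e_j^* of H (x) H^* is indexed by 2*i + j *)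
Definition idx (i j : 'I_2) : 'I_4 := inord (2 * i + j).

Definition ptr2 (P : 'M[C]_4) : 'M[C]_2 :=
  \matrix_(i, k) \sum_(j < 2) P (idx i j) (idx k j).
Definition ptr1 (P : 'M[C]_4) : 'M[C]_2 :=
  \matrix_(j, l) \sum_(i < 2) P (idx i j) (idx i l).

Definition coupling (rho omega : 'M[C]_2) (P : 'M[C]_4) : Prop :=
  is_state P /\ ptr2 P = omega /\ ptr1 P = rho^T.

Definition tens (A B : 'M[C]_2) : 'M[C]_4 :=
  \matrix_(a, b) \sum_(i < 2) \sum_(j < 2) \sum_(k < 2) \sum_(l < 2)
     (if (a == idx i j) && (b == idx k l) then A i k * B j l else 0).

Definition sigma_x : 'M[C]_2 := \matrix_(i, j) (if i == j then 0 else 1).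
Definition sigma_z : 'M[C]_2 :=
  \matrix_(i, j) (if i == j then (if i == ord0 then 1 else -1) else 0).

(* C_{z,p} = 2^(p-1) (I (x) I^T - sigma_z (x) sigma_z^T) = diag(0,2^p,2^p,0) *)
Definition Czp (p : R) : 'M[C]_4 :=
  ((2 `^ (p - 1))%:C) *: (tens 1 1%:M^T - tens sigma_z sigma_z^T).

(* minimal transport cost: m = min_{P in C(rho,omega)} tr[P C_{z,p}], i.e.
   D_{z,p}(rho,omega)^p = m *)
Definition is_min_cost (p : R) (rho omega : 'M[C]_2) (m : R) : Prop :=
  (exists P, coupling rho omega P /\ \tr (P *m Czp p) = m%:C) /\
  (forall P, coupling rho omega P -> m%:C <= \tr (P *m Czp p)).

Definition rho_x (a : R) : 'M[C]_2 := 2^-1 *: (1%:M + (a%:C) *: sigma_x).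

End Defs.

(* Main.v *)
Require Import Defs.
From HB Require Import structures.
From mathcomp Require Import all_boot all_order all_algebra.
From mathcomp Require Import complex.
From mathcomp Require Import reals exp.
From mathcomp Require Import ring lra.
Import Order.TTheory GRing.Theory Num.Theory.
Local Open Scope ring_scope.

Set Implicit Arguments. Unset Strict Implicit. Unset Printing Implicit Defensive.
Section S.
Local Open Scope complex_scope.
Variable R : realType.
Local Notation C := (R[i]).
Definition o0 : 'I_4 := @Ordinal 4 0 isT.
Definition o1 : 'I_4 := @Ordinal 4 1 isT.
Definition o2 : 'I_4 := @Ordinal 4 2 isT.
Definition o3 : 'I_4 := @Ordinal 4 3 isT.
Definition j0 : 'I_2 := @Ordinal 2 0 isT.
Definition j1 : 'I_2 := @Ordinal 2 1 isT.
Lemma sum4 (V : nmodType) (F : 'I_4 -> V) : \sum_(k < 4) F k = F o0 + F o1 + F o2 + F o3.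
Proof. by rewrite !big_ord_recr big_ord0 /= add0r; congr (_+_+_+_); congr F; apply/val_inj. Qed.
Lemma sum2 (V : nmodType) (F : 'I_2 -> V) : \sum_(k < 2) F k = F j0 + F j1.
Proof. by rewrite !big_ord_recr big_ord0 /= add0r; congr (_+_); congr F; apply/val_inj. Qed.
Lemma idx00 : idx j0 j0 = o0. Proof. by apply/val_inj; rewrite /= inordK. Qed.
Lemma idx01 : idx j0 j1 = o1. Proof. by apply/val_inj; rewrite /= inordK. Qed.
Lemma idx10 : idx j1 j0 = o2. Proof. by apply/val_inj; rewrite /= inordK. Qed.
Lemma idx11 : idx j1 j1 = o3. Proof. by apply/val_inj; rewrite /= inordK. Qed.
Lemma ord4P (i : 'I_4) : i = o0 \/ i = o1 \/ i = o2 \/ i = o3.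
Proof.
case: i => [[|[|[|[|n]]]] Hn]; [left|right;left|right;right;left|right;right;right|by []];
 by apply/val_inj.
Qed.
Lemma ord2P (i : 'I_2) : i = j0 \/ i = j1.
Proof. case: i => [[|[|n]] Hn]; [left|right|by []]; by apply/val_inj. Qed.

Lemma Czp_E (p : R) (i k : 'I_4) : Czp p i k =
  (2 `^ (p - 1))%:C * (if i == k then (if (i == o1) || (i == o2) then 2 else 0) else 0 : C).
Proof.
rewrite /Czp /tens !mxE !sum2 !idx00 !idx01 !idx10 !idx11.
case: (ord4P i) => [->|[->|[->|->]]]; case: (ord4P k) => [->|[->|[->|->]]];
rewrite /= !mxE /= ; ring.
Qed.
Lemma rho_E (a : R) (i k : 'I_2) : rho_x a i k = if i == k then (2^-1)%:C else (a/2)%:C.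
Proof.
rewrite /rho_x !mxE.
case: (ord2P i) => ->; case: (ord2P k) => -> /=;
rewrite !(rmorphD, rmorphB, rmorphM, rmorphN, fmorphV, rmorph_nat, rmorph1, rmorph0); ring.
Qed.
Lemma ptr2_E (P : 'M[C]_4) i k : ptr2 P i k = P (idx i j0) (idx k j0) + P (idx i j1) (idx k j1).
Proof. by rewrite mxE sum2. Qed.
Lemma ptr1_E (P : 'M[C]_4) i k : ptr1 P i k = P (idx j0 i) (idx j0 k) + P (idx j1 i) (idx j1 k).
Proof. by rewrite mxE sum2. Qed.
Lemma ptr1T_E (P : 'M[C]_4) i k : (ptr1 P)^T i k = P (idx j0 k) (idx j0 i) + P (idx j1 k) (idx j1 i).
Proof. by rewrite !mxE sum2. Qed.
Lemma cost_E (P : 'M[C]_4) (p : R) :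
  \tr (P *m Czp p) = (2 `^ (p - 1))%:C * 2 * (P o1 o1 + P o2 o2).
Proof. rewrite /mxtrace sum4 !mxE !sum4 !Czp_E /=; ring. Qed.
Lemma tr_E (P : 'M[C]_4) : \tr P = P o0 o0 + P o1 o1 + P o2 o2 + P o3 o3.
Proof. by rewrite /mxtrace sum4. Qed.

Definition sel (c0 c1 c2 c3 : R) (n : nat) : R :=
  match n with 0 => c0 | 1 => c1 | 2 => c2 | _ => c3 end.
Definition vec (c0 c1 c2 c3 : R) : 'cV[C]_4 := \col_k (sel c0 c1 c2 c3 (val k))%:C.
Lemma Qvec (P : 'M[C]_4) c0 c1 c2 c3 :
  (adjmx (vec c0 c1 c2 c3) *m P *m vec c0 c1 c2 c3) ord0 ord0 =
  \sum_(i < 4) \sum_(j < 4) (sel c0 c1 c2 c3 (val i))%:C * P i j * (sel c0 c1 c2 c3 (val j))%:C.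
Proof.
rewrite !mxE exchange_big /=; apply: eq_bigr => j _; rewrite !mxE big_distrl /=.
apply: eq_bigr => i _; rewrite !mxE conjc_real //.
Qed.
Lemma trE (M : 'M[C]_2) i k : M^T i k = M k i.
Proof. by rewrite mxE. Qed.
Lemma m2 (P : 'M[C]_4) (b : R) (i k : 'I_2) : ptr2 P = rho_x b ->
  P (idx i j0) (idx k j0) + P (idx i j1) (idx k j1) = rho_x b i k.
Proof. by move=> h; rewrite -ptr2_E h. Qed.
Lemma m1 (P : 'M[C]_4) (a : R) (i k : 'I_2) : ptr1 P = (rho_x a)^T ->
  P (idx j0 i) (idx j0 k) + P (idx j1 i) (idx j1 k) = rho_x a k i.
Proof. by move=> h; rewrite -ptr1_E h trE. Qed.
Lemma m2_00 (P : 'M[C]_4) (b : R) : ptr2 P = rho_x b -> P o0 o0 + P o1 o1 = (2^-1)%:C.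
Proof. by move/(m2 j0 j0); rewrite rho_E idx00 idx01. Qed.
Lemma m2_01 (P : 'M[C]_4) (b : R) : ptr2 P = rho_x b -> P o0 o2 + P o1 o3 = (b/2)%:C.
Proof. by move/(m2 j0 j1); rewrite rho_E idx00 idx01 idx10 idx11. Qed.
Lemma m2_10 (P : 'M[C]_4) (b : R) : ptr2 P = rho_x b -> P o2 o0 + P o3 o1 = (b/2)%:C.
Proof. by move/(m2 j1 j0); rewrite rho_E idx00 idx01 idx10 idx11. Qed.
Lemma m2_11 (P : 'M[C]_4) (b : R) : ptr2 P = rho_x b -> P o2 o2 + P o3 o3 = (2^-1)%:C.
Proof. by move/(m2 j1 j1); rewrite rho_E idx10 idx11. Qed.
Lemma m1_00 (P : 'M[C]_4) (a : R) : ptr1 P = (rho_x a)^T -> P o0 o0 + P o2 o2 = (2^-1)%:C.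
Proof. by move/(m1 j0 j0); rewrite rho_E idx00 idx10. Qed.
Lemma m1_01 (P : 'M[C]_4) (a : R) : ptr1 P = (rho_x a)^T -> P o0 o1 + P o2 o3 = (a/2)%:C.
Proof. by move/(m1 j0 j1); rewrite rho_E idx00 idx01 idx10 idx11. Qed.
Lemma m1_10 (P : 'M[C]_4) (a : R) : ptr1 P = (rho_x a)^T -> P o1 o0 + P o3 o2 = (a/2)%:C.
Proof. by move/(m1 j1 j0); rewrite rho_E idx00 idx01 idx10 idx11. Qed.
Lemma m1_11 (P : 'M[C]_4) (a : R) : ptr1 P = (rho_x a)^T -> P o1 o1 + P o3 o3 = (2^-1)%:C.
Proof. by move/(m1 j1 j1); rewrite rho_E idx01 idx11. Qed.
Lemma ReD (z w : C) : complex.Re (z + w) = complex.Re z + complex.Re w.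
Proof. by case: z; case: w. Qed.
Lemma ImD (z w : C) : complex.Im (z + w) = complex.Im z + complex.Im w.
Proof. by case: z; case: w. Qed.
Lemma ReQ (z w : C) (c : R) : complex.Re (z^* * c%:C * w) = c * (complex.Re z * complex.Re w + complex.Im z * complex.Im w).
Proof. case: z => a b; case: w => d e /=. ring. Qed.
Lemma ImQ (z w : C) (c : R) : complex.Im (z^* * c%:C * w) = c * (complex.Re z * complex.Im w - complex.Im z * complex.Re w).
Proof. case: z => a b; case: w => d e /=. ring. Qed.
Lemma ReR (z : C) (c d : R) : complex.Re (c%:C * z * d%:C) = c * complex.Re z * d.
Proof. case: z => a b /=. ring. Qed.
Lemma ReC (c : R) : complex.Re (c%:C) = c. Proof. by []. Qed.
Lemma ImC (c : R) : complex.Im (c%:C) = 0. Proof. by []. Qed.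
Lemma Re_ge0 (z : C) : 0 <= z -> 0 <= complex.Re z.
Proof. by rewrite lecE => /andP[]. Qed.
Lemma ge0_ReIm (z : C) : complex.Im z = 0 -> 0 <= complex.Re z -> 0 <= z.
Proof. by move=> h1 h2; rewrite lecE h1 /= eqxx. Qed.

Lemma solve_rR (X Y c : R) : X + Y = c -> Y = c - X.
Proof. by move=> <-; ring. Qed.
Lemma reE (z w : C) (c : R) : z + w = c%:C -> complex.Re z + complex.Re w = c.
Proof. by move/(congr1 (@complex.Re R)); rewrite ReD. Qed.
Lemma ge0_eqR (z w : R) : 0 <= z -> z = w -> 0 <= w.
Proof. by move=> h <-. Qed.
Lemma psd_vec (P : 'M[C]_4) c0 c1 c2 c3 : psd P ->
  0 <= \sum_(i < 4) \sum_(j < 4) sel c0 c1 c2 c3 (val i) * complex.Re (P i j) * sel c0 c1 c2 c3 (val j).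
Proof.
move=> [_ H]; have := Re_ge0 (H (vec c0 c1 c2 c3)); rewrite Qvec.
by rewrite !sum4 !ReD !ReR.
Qed.
Lemma lower_key (a b : R) (P : 'M[C]_4) : coupling (rho_x a) (rho_x b) P ->
 exists x : R, complex.Re (P o1 o1) + complex.Re (P o2 o2) = 1 - 2*x /\
  (forall u w, 0 <= 2*u^+2*x + u*w*b + w^+2*(1-2*x)) /\
  (forall u w, 0 <= 2*u^+2*x + u*w*a + w^+2*(1-2*x)).
Proof.
move=> [[hpsd tr1] [h2 h1]].
have e00 := reE (m2_00 h2); have e01 := reE (m2_01 h2); have e10 := reE (m2_10 h2); have e11 := reE (m2_11 h2).
have f00 := reE (m1_00 h1); have f01 := reE (m1_01 h1); have f10 := reE (m1_10 h1); have f11 := reE (m1_11 h1).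
set x := complex.Re (P o0 o0).
have s11 := solve_rR e00. have s22 := solve_rR f00. have s33 := solve_rR e11.
have s13 := solve_rR e01. have s31 := solve_rR e10.
have s23 := solve_rR f01. have s32 := solve_rR f10.
exists x; split.
  rewrite s11 s22; lra.
split.
  move=> u w.
  have q1 := psd_vec u 0 w 0 hpsd; have q2 := psd_vec 0 w 0 u hpsd.
  rewrite !sum4 /= in q1; rewrite !sum4 /= in q2.
  rewrite s33 s22 s11 s13 s31 in q1 q2.
  apply: (ge0_eqR (addr_ge0 q1 q2)). rewrite /x; by field; rewrite ?pnatr_eq0.
move=> u w.
have q1 := psd_vec u w 0 0 hpsd; have q2 := psd_vec 0 0 w u hpsd.
rewrite !sum4 /= in q1; rewrite !sum4 /= in q2.
rewrite s33 s22 s11 s23 s32 in q1 q2.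
apply: (ge0_eqR (addr_ge0 q1 q2)). rewrite /x; by field; rewrite ?pnatr_eq0.
Qed.
Lemma Recost (k : R) (z : C) : complex.Re (k%:C * 2 * z) = 2 * k * complex.Re z.
Proof. case: z => r q /=. ring. Qed.
Lemma Imcost (k : R) (z : C) : complex.Im (k%:C * 2 * z) = 2 * k * complex.Im z.
Proof. case: z => r q /=. ring. Qed.
Lemma le_from (z : C) (k : R) : complex.Im z = 0 -> k <= complex.Re z -> k%:C <= z.
Proof. by move=> h1 h2; rewrite lecE h1 /= eqxx. Qed.
Lemma herm_ent (P : 'M[C]_4) i : adjmx P = P -> complex.Im (P i i) = 0.
Proof. move/(congr1 (fun M : 'M[C]_4 => M i i)); rewrite mxE. case: (P i i) => r q /= [] H; lra. Qed.

Lemma maxE2 (a b : R) : (a^+2 <= Num.max (a^+2) (b^+2)) /\ (b^+2 <= Num.max (a^+2) (b^+2)) /\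
  (Num.max (a^+2) (b^+2) = a^+2 \/ Num.max (a^+2) (b^+2) = b^+2).
Proof.
rewrite /Num.max; case: leP => h; split; try split; try lra; by [left|right].
Qed.

Lemma final_ineq (a b x K : R) : 0 <= K -> -1 <= a <= 1 -> -1 <= b <= 1 ->
  (forall u w, 0 <= 2*u^+2*x + u*w*b + w^+2*(1-2*x)) ->
  (forall u w, 0 <= 2*u^+2*x + u*w*a + w^+2*(1-2*x)) ->
  K * (1 - Num.sqrt (1 - Num.max (a ^+ 2) (b ^+ 2))) <= 2 * K * (1 - 2 * x).
Proof.
move=> hK /andP[ha1 ha2] /andP[hb1 hb2] hb ha.
have [hma [hmb hm]] := maxE2 a b.
set m := Num.max (a^+2) (b^+2) in hma hmb hm *.
have hm1 : m <= 1 by case: hm => ->; nra.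
have hs0 : 0 <= Num.sqrt (1 - m) by apply: sqrtr_ge0.
have hs2 : Num.sqrt (1 - m) ^+ 2 = 1 - m by rewrite sqr_sqrtr // subr_ge0.
set s := Num.sqrt (1 - m) in hs0 hs2 *.
suff h4 : 4 * x <= 1 + s by nra.
case: (leP x (4^-1)) => hx; first by lra.
have hx0 : 0 < x by lra.
have kb := hb (- b) (4 * x); have ka := ha (- a) (4 * x).
have kb' : 2 * b^+2 <= 16 * x - 32 * x^+2 by nra.
have ka' : 2 * a^+2 <= 16 * x - 32 * x^+2 by nra.
have km : m <= 8 * x - 16 * x^+2 by case: hm => ->; lra.
nra.
Qed.

Lemma complex_ext (z w : C) : complex.Re z = complex.Re w -> complex.Im z = complex.Im w -> z = w.
Proof. by case: z; case: w => /= ? ? ? ? -> ->. Qed.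

Theorem lower_main (a b p : R) (P : 'M[C]_4) :
  -1 <= a <= 1 -> -1 <= b <= 1 -> coupling (rho_x a) (rho_x b) P ->
  (2 `^ (p - 1) * (1 - Num.sqrt (1 - Num.max (a ^+ 2) (b ^+ 2))))%:C <= \tr (P *m Czp p).
Proof.
move=> ha hb hc.
have [x [hx [hkb hka]]] := lower_key hc.
have herm : adjmx P = P by case: hc => [[[]]].
rewrite cost_E; apply: le_from.
  by rewrite Imcost ImD !herm_ent // addr0 mulr0.
rewrite Recost ReD hx; apply: final_ineq => //.
by apply: powR_ge0.
Qed.

Definition mm (a b : R) := Num.max (a ^+ 2) (b ^+ 2).
Definition ss (a b : R) := Num.sqrt (1 - mm a b).
Definition xx (a b : R) := (1 + ss a b) / 4.
Definition yy (a b : R) := (1 - ss a b) / 4.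
Definition tt (a b : R) := a * b / mm a b.
Definition Pr (a b : R) (i j : nat) : R :=
  match i, j with
  | 0, 0 => xx a b | 0, 1 => a / 4 | 0, 2 => b / 4 | 0, _ => xx a b * tt a b
  | 1, 0 => a / 4 | 1, 1 => yy a b | 1, 2 => yy a b * tt a b | 1, _ => b / 4
  | 2, 0 => b / 4 | 2, 1 => yy a b * tt a b | 2, 2 => yy a b | 2, _ => a / 4
  | _, 0 => xx a b * tt a b | _, 1 => b / 4 | _, 2 => a / 4 | _, _ => xx a b
  end.
Definition Pw (a b : R) : 'M[C]_4 := \matrix_(i, j) (Pr a b (val i) (val j))%:C.
Lemma Pw_E a b i j : Pw a b i j = (Pr a b (val i) (val j))%:C.
Proof. by rewrite mxE. Qed.
Lemma adj_E n m (A : 'M[C]_(n, m)) i j : adjmx A i j = (A j i)^*.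
Proof. by rewrite mxE. Qed.
Lemma Pr_sym a b (i j : 'I_4) : Pr a b (val j) (val i) = Pr a b (val i) (val j).
Proof. by case: (ord4P i) => [->|[->|[->|->]]]; case: (ord4P j) => [->|[->|[->|->]]]. Qed.

Lemma Pw_marg2 a b : ptr2 (Pw a b) = rho_x b.
Proof.
apply/matrixP => i k; rewrite ptr2_E rho_E !Pw_E.
case: (ord2P i) => ->; case: (ord2P k) => ->;
rewrite ?idx00 ?idx01 ?idx10 ?idx11 /=;
apply: complex_ext; rewrite ?ReD ?ImD ?ReC ?ImC /xx /yy; by [lra|rewrite addr0].
Qed.
Lemma Pw_marg1 a b : ptr1 (Pw a b) = (rho_x a)^T.
Proof.
apply/matrixP => i k; rewrite ptr1_E trE rho_E !Pw_E.
case: (ord2P i) => ->; case: (ord2P k) => ->;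
rewrite ?idx00 ?idx01 ?idx10 ?idx11 /=;
apply: complex_ext; rewrite ?ReD ?ImD ?ReC ?ImC /xx /yy; by [lra|rewrite addr0].
Qed.
Lemma Pw_tr a b : \tr (Pw a b) = 1.
Proof.
rewrite tr_E !Pw_E /=; apply: complex_ext; rewrite ?ReD ?ImD ?ReC ?ImC /xx /yy /=; lra.
Qed.
Lemma Pw_cost a b p : \tr (Pw a b *m Czp p) =
  (2 `^ (p - 1) * (1 - Num.sqrt (1 - Num.max (a ^+ 2) (b ^+ 2))))%:C.
Proof.
rewrite cost_E !Pw_E /=; apply: complex_ext; rewrite ?Recost ?Imcost ?ReD ?ImD ?ReC ?ImC /yy /ss /mm; lra.
Qed.

Lemma quad2 (X Y Z p q : R) : 0 <= X -> 0 <= Y -> Z^+2 <= 4 * X * Y ->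
  0 <= X * p^+2 + Z * p * q + Y * q^+2.
Proof.
move=> hX hY hZ.
have [X0|X0] : X = 0 \/ 0 < X by lra.
  have Z0 : Z = 0 by rewrite X0 in hZ; nra.
  rewrite X0 Z0; nra.
have h : 4 * X * (X * p^+2 + Z * p * q + Y * q^+2) = (2 * X * p+Z * q)^+2 + (4 * X * Y - Z^+2) * q^+2 by ring.
have h2 : 0 <= 4 * X * (X * p^+2 + Z * p * q + Y * q^+2) by rewrite h; apply: addr_ge0; [apply: sqr_ge0 | apply: mulr_ge0; [lra | apply: sqr_ge0]].
nra.
Qed.

Lemma params (a b : R) : -1 <= a <= 1 -> -1 <= b <= 1 ->
  [/\ 0 <= xx a b, 0 <= yy a b, 16 * xx a b * yy a b = mm a b,
      0 <= 1 + tt a b /\ 0 <= 1 - tt a b &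
      (a + b)^+2 <= mm a b * (1 + tt a b)^+2 /\ (a - b)^+2 <= mm a b * (1 - tt a b)^+2].
Proof.
move=> /andP[ha1 ha2] /andP[hb1 hb2].
have [hma [hmb hm]] := maxE2 a b.
rewrite /xx /yy /tt /ss.
rewrite -/(mm a b) in hma hmb hm.
set m := mm a b in hma hmb hm *.
have hm1 : m <= 1 by case: hm => ->; nra.
have hs0 : 0 <= Num.sqrt (1 - m) by apply: sqrtr_ge0.
have hs2 : Num.sqrt (1 - m) ^+ 2 = 1 - m by rewrite sqr_sqrtr // subr_ge0.
set s := Num.sqrt (1 - m) in hs0 hs2 *.
have hs1 : s <= 1 by nra.
have m00 : 0 <= m by apply: le_trans hma; apply: sqr_ge0.
have [m0|m0] : m = 0 \/ 0 < m by lra.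
  have a0 : a = 0 by nra.
  have b0 : b = 0 by nra.
  rewrite a0 b0 m0 !mul0r; split; try lra; try (split; nra).
have hT : (a * b / m) * m = a * b by rewrite mulfVK // gt_eqF.
set T := a * b / m in hT *.
have hab : 0 <= m + a * b by nra.
have hab' : 0 <= m - a * b by nra.
have hprod : (m - a^+2) * (m - b^+2) = 0 by case: hm => ->; rewrite subrr ?mul0r ?mulr0.
have hxy : 16 * ((1 + s) / 4) * ((1 - s) / 4) = m.
  have -> : 16 * ((1 + s) / 4) * ((1 - s) / 4) = (1 - s^+2) / 1 by field.
  rewrite hs2; by field; rewrite ?pnatr_eq0.
have hT1 : 0 <= 1 + T by nra.
have hT2 : 0 <= 1 - T by nra.
have hP : (a + b)^+2 <= m * (1 + T)^+2.
  have E : m * (m * (1 + T)^+2 - (a + b)^+2) = (m + T * m)^+2 - m * (a+b)^+2 by ring.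
  rewrite hT in E.
  have E2 : (m + a * b)^+2 - m * (a+b)^+2 = (m - a^+2) * (m - b^+2) by ring.
  rewrite E2 hprod in E.
  have : m * (1 + T)^+2 - (a + b)^+2 = 0.
    by move/eqP: E; rewrite mulf_eq0 (gt_eqF m0) /= => /eqP.
  by move=> hh; rewrite -subr_ge0 hh.
have hM : (a - b)^+2 <= m * (1 - T)^+2.
  have E : m * (m * (1 - T)^+2 - (a - b)^+2) = (m - T * m)^+2 - m * (a-b)^+2 by ring.
  rewrite hT in E.
  have E2 : (m - a * b)^+2 - m * (a-b)^+2 = (m - a^+2) * (m - b^+2) by ring.
  rewrite E2 hprod in E.
  have : m * (1 - T)^+2 - (a - b)^+2 = 0.
    by move/eqP: E; rewrite mulf_eq0 (gt_eqF m0) /= => /eqP.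
  by move=> hh; rewrite -subr_ge0 hh.
split => //; lra.
Qed.

Definition Qr (a b z0 z1 z2 z3 : R) :=
  xx a b * (z0 * z0 + z3 * z3) + yy a b * (z1 * z1 + z2 * z2)
  + a / 4 * (z0 * z1 + z1 * z0 + z2 * z3 + z3 * z2)
  + b / 4 * (z0 * z2 + z2 * z0 + z1 * z3 + z3 * z1)
  + xx a b * tt a b * (z0 * z3 + z3 * z0) + yy a b * tt a b * (z1 * z2 + z2 * z1).

Lemma Qr_ge0 (a b z0 z1 z2 z3 : R) : -1 <= a <= 1 -> -1 <= b <= 1 ->
  0 <= Qr a b z0 z1 z2 z3.
Proof.
move=> ha hb; have [hx hy hxy [hT1 hT2] [hP hM]] := params ha hb.
set x := xx a b in hx hy hxy *; set y := yy a b in hx hy hxy *.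
set t := tt a b in hT1 hT2 hP hM *; set m := mm a b in hxy hP hM.
have E : Qr a b z0 z1 z2 z3 = 2^-1 * (
   ((x + x * t) * (z0 + z3) ^+ 2 + ((a + b) / 2) * (z0 + z3) * (z1 + z2) + (y + y * t) * (z1 + z2) ^+ 2) +
   ((x - x * t) * (z0 - z3) ^+ 2 + ((a - b) / 2) * (z0 - z3) * (z1 - z2) + (y - y * t) * (z1 - z2) ^+ 2)).
  rewrite /Qr -/x -/y -/t; by field; rewrite ?pnatr_eq0.
have h4p : 4 * (x + x * t) * (y + y * t) = (16 * x * y) * (1 + t) ^+ 2 / 4 by field; rewrite ?pnatr_eq0.
have h4m : 4 * (x - x * t) * (y - y * t) = (16 * x * y) * (1 - t) ^+ 2 / 4 by field; rewrite ?pnatr_eq0.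
rewrite hxy in h4p h4m.
rewrite E; apply: mulr_ge0; first lra.
apply: addr_ge0; apply: quad2.
- have -> : x + x * t = x * (1 + t) by ring. exact: mulr_ge0.
- have -> : y + y * t = y * (1 + t) by ring. exact: mulr_ge0.
- rewrite h4p; lra.
- have -> : x - x * t = x * (1 - t) by ring. exact: mulr_ge0.
- have -> : y - y * t = y * (1 - t) by ring. exact: mulr_ge0.
- rewrite h4m; lra.
Qed.

Lemma Qgen (P : 'M[C]_4) (v : 'cV[C]_4) :
  (adjmx v *m P *m v) ord0 ord0 = \sum_(i < 4) \sum_(j < 4) (v i ord0)^* * P i j * v j ord0.
Proof.
rewrite !mxE exchange_big /=; apply: eq_bigr => j _; rewrite !mxE big_distrl /=.
by apply: eq_bigr => i _; rewrite !mxE.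
Qed.

Lemma Pw_psd (a b : R) : -1 <= a <= 1 -> -1 <= b <= 1 -> psd (Pw a b).
Proof.
move=> ha hb; split.
  apply/matrixP => i j; rewrite adj_E !Pw_E conjc_real; congr (_ %:C); exact: Pr_sym.
move=> v; rewrite Qgen; apply: ge0_ReIm.
  rewrite !sum4 !ImD !Pw_E !ImQ /=; ring.
rewrite !sum4 !ReD !Pw_E !ReQ /=.
apply: (ge0_eqR (addr_ge0
  (Qr_ge0 (complex.Re (v o0 ord0)) (complex.Re (v o1 ord0)) (complex.Re (v o2 ord0)) (complex.Re (v o3 ord0)) ha hb)
  (Qr_ge0 (complex.Im (v o0 ord0)) (complex.Im (v o1 ord0)) (complex.Im (v o2 ord0)) (complex.Im (v o3 ord0)) ha hb))).
rewrite /Qr; ring.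
Qed.
End S.

Unset Implicit Arguments. Set Strict Implicit.

Theorem proposition3p5 (R : realType) (a b p : R) :
  -1 <= a <= 1 -> -1 <= b <= 1 -> 1 <= p ->
  is_min_cost p (rho_x a) (rho_x b)
    (2 `^ (p - 1) * (1 - Num.sqrt (1 - Num.max (a ^+ 2) (b ^+ 2)))).
Proof.
move=> ha hb hp; split.
  exists (Pw a b); split; last exact: Pw_cost.
  split; [split; [exact: Pw_psd | exact: Pw_tr] | split; [exact: Pw_marg2 | exact: Pw_marg1]].
move=> P hc; exact: lower_main.
Qed.
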